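(* In the dynamic weighted storage system described in the context, each read/write operation always finishes in the last installed view in the system ($lastview$).
   Context: System: servers $S=\{s_1,\dots,s_n\}$ and clients; reliable links; asynchronous; crash failures only; at most $f$ servers crash and $2f+1\le n$. Views form a sequence $v_0,v_1,\dots$ with $v_{k+1}=v_k.succ$; $v<w$ means $w$ is obtained from $v$ by applying $succ$ one or more times. Each server $s$ has a current view $s.cview$ (initially $v_0$) and a weight in each view; in every view each server's weight is strictly between $\mathbb{wl}=n/(2(n-f))$ and $\mathbb{wu}=n/(2f)$ and the total weight is at most $n$. A weighted majority for view $v$ is a set of servers whose weights in $v$ sum to more than $n/2$. View changer (server $s$ with $s.cview=v$): on timeout it sends $\langle\text{change\_view},v.succ\rangle$; once it has received or sent change\_view for $v.succ$ it forwards it if needed, disables read/write operations, sends $\langle\text{state\_update},(val,ts,cid),v,w\rangle$ to all servers (it has then uninstalled $v$), waits for state\_update messages for view $v$ with weights summing to more than $n/2$, adopts the value with largest $(ts,cid)$, sets $s.cview\leftarrow v.succ$ (installs $v.succ$) and re-enables read/write operations. A view $v$ is installed in the system once some server installs it and no server has a larger current view; $lastview$ is the last view installed in the system. Read/write protocol: each client keeps $cview$ (initially $v_0$). Each operation has two phases, both executed with the same client view (a view change restarts the whole operation); in each phase the client sends a request tagged with $cview$ to all servers; a server (when read/write operations are enabled) replies with its current view and, if it equals the request's view, its weight (else $\bot$), plus its register $(val,ts,cid)$ in phase 1, and in phase 2 stores the written value if views match and its $(ts,cid)$ is larger. The client collects replies with view equal to $cview$; on a reply with another view $v$ it sets $cview\leftarrow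 v$ if $cview<v$ and restarts the operation; a phase finishes when collected weights exceed $n/2$. *)

(* Defs.v *)
(* Operational model of the dynamic weighted storage system:
   servers 'I_n, clients indexed by nat, asynchronous message passing
   (network = multiset of in-flight messages, delivered in any order,
   each exactly once), crash failures (at most f), views = nat with
   v0 = 0 and succ = S. *)
From HB Require Import structures.
From mathcomp Require Import all_boot all_order all_algebra.
Set Implicit Arguments. Unset Strict Implicit. Unset Printing Implicit Defensive.
Import Order.TTheory GRing.Theory Num.Theory.
Local Open Scope ring_scope.

Definition view := nat.
Definition v0 : view := 0%N.
Definition vsucc (v : view) : view := v.+1.

Definition reg := (nat * nat * nat)%type.
Definition rval (r : reg) : nat := r.1.1.
Definition rts (r : reg) : nat := r.1.2.
Definition rcid (r : reg) : nat := r.2.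
Definition reg_lt (a b : reg) : bool :=
  (rts a < rts b)%N || ((rts a == rts b) && (rcid a < rcid b)%N).
Definition reg_max (a b : reg) : reg := if reg_lt a b then b else a.
Definition reg_init : reg := (0, 0, 0)%N.

Inductive op := OpRead | OpWrite of nat.
Inductive phase := Ph1 | Ph2.

Section Model.
Variables (R : realFieldType) (n f : nat) (W : view -> 'I_n -> R).

Definition client := nat.

Inductive msg :=
| MChangeView (dst : 'I_n) (w : view)
| MStateUpdate (dst src : 'I_n) (r : reg) (v w : view)
| MReq (dst : 'I_n) (c : client) (rid : nat) (ph : phase) (v : view) (wr : option reg)
| MRep (c : client) (src : 'I_n) (rid : nat) (sv : view) (wt : option R) (r : reg).

Record sstate := SState {
  s_view : view;
  s_enabled : bool;
  s_reg : reg;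
  s_cv : seq view;          (* views w for which change_view was received or sent *)
  s_su : seq (view * 'I_n * reg);  (* received state_update (view, sender, reg) *)
  s_crashed : bool }.

Inductive cstatus :=
| Idle
| Busy (o : op) (ph : phase) (wr : option reg) (coll : seq ('I_n * R * reg)).

Record cstate := CState {
  c_view : view;
  c_rid : nat;       (* tag of the current phase (incremented at each phase start) *)
  c_status : cstatus }.

Record gstate := GState {
  srv : 'I_n -> sstate;
  cli : client -> cstate;
  net : seq msg }.

Definition set_srv (g : gstate) (s : 'I_n) (x : sstate) : gstate :=
  GState (fun t => if t == s then x else srv g t) (cli g) (net g).
Definition set_cli (g : gstate) (c : client) (x : cstate) : gstate :=
  GState (srv g) (fun d => if d == c then x else cli g d) (net g).
Definition set_net (g : gstate) (m : seq msg) : gstate :=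
  GState (srv g) (cli g) m.

Definition bcast (F : 'I_n -> msg) : seq msg := [seq F t | t <- enum 'I_n].

Definition init_state : gstate :=
  GState (fun _ => SState v0 true reg_init [::] [::] false)
         (fun _ => CState v0 0 Idle) [::].

(* the last view installed in the system: the largest current view of a server
   (it is installed by the server holding it, or it is v0) *)
Definition lastview (g : gstate) : view := \max_(s < n) s_view (srv g s).

Definition su_senders (su : seq (view * 'I_n * reg)) (v : view) : {set 'I_n} :=
  [set t | has (fun e => (e.1.1 == v) && (e.1.2 == t)) su].

Definition coll_weight (coll : seq ('I_n * R * reg)) : R :=
  \sum_(e <- coll) e.1.2.

Definition half_n : R := n%:R / 2%:R.

Inductive label :=
| LTimeout (s : 'I_n)
| LRecvCV (s : 'I_n)
| LStartVC (s : 'I_n)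
| LRecvSU (s : 'I_n)
| LInstall (s : 'I_n)
| LServe (s : 'I_n)
| LCrash (s : 'I_n)
| LInvoke (c : client)
| LDrop (c : client)
| LRestart (c : client)
| LCollect (c : client)
| LPhaseDone (c : client) (ph : phase) (rid : nat) (v : view).

Inductive step : gstate -> label -> gstate -> Prop :=
| st_timeout g s x :
    x = srv g s -> ~~ s_crashed x ->
    step g (LTimeout s)
      (set_net (set_srv g s (SState (s_view x) (s_enabled x) (s_reg x)
                                    (vsucc (s_view x) :: s_cv x) (s_su x) false))
               (net g ++ bcast (fun t => MChangeView t (vsucc (s_view x)))))
| st_recv_cv g s x l1 l2 w :
    x = srv g s -> ~~ s_crashed x ->
    net g = l1 ++ MChangeView s w :: l2 ->
    step g (LRecvCV s)
      (set_net (set_srv g s (SState (s_view x) (s_enabled x) (s_reg x)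
                                    (w :: s_cv x) (s_su x) false))
               (l1 ++ l2))
| st_start_vc g s x :
    x = srv g s -> ~~ s_crashed x -> s_enabled x ->
    vsucc (s_view x) \in s_cv x ->
    step g (LStartVC s)
      (set_net (set_srv g s (SState (s_view x) false (s_reg x) (s_cv x) (s_su x) false))
               (net g ++ bcast (fun t => MChangeView t (vsucc (s_view x)))
                      ++ bcast (fun t => MStateUpdate t s (s_reg x) (s_view x)
                                                      (vsucc (s_view x)))))
| st_recv_su g s x l1 l2 src r v w :
    x = srv g s -> ~~ s_crashed x ->
    net g = l1 ++ MStateUpdate s src r v w :: l2 ->
    step g (LRecvSU s)
      (set_net (set_srv g s (SState (s_view x) (s_enabled x) (s_reg x)
                                    (s_cv x) ((v, src, r) :: s_su x) false))
               (l1 ++ l2))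
| st_install g s x :
    x = srv g s -> ~~ s_crashed x -> ~~ s_enabled x ->
    half_n < \sum_(t in su_senders (s_su x) (s_view x)) W (s_view x) t ->
    step g (LInstall s)
      (set_srv g s (SState (vsucc (s_view x)) true
                    (foldr reg_max (s_reg x)
                       [seq e.2 | e <- s_su x & e.1.1 == s_view x])
                    (s_cv x) (s_su x) false))
| st_serve g s x l1 l2 c rid ph v wr :
    x = srv g s -> ~~ s_crashed x -> s_enabled x ->
    net g = l1 ++ MReq s c rid ph v wr :: l2 ->
    let same := (v == s_view x) in
    let newreg :=
      match ph, wr with
      | Ph2, Some r => if same && reg_lt (s_reg x) r then r else s_reg x
      | _, _ => s_reg x
      end in
    step g (LServe s)
      (set_net (set_srv g s (SState (s_view x) true newreg (s_cv x) (s_su x) false))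
               (l1 ++ l2 ++ [:: MRep c s rid (s_view x)
                                 (if same then Some (W (s_view x) s) else None)
                                 (s_reg x)]))
| st_crash g s x :
    x = srv g s -> ~~ s_crashed x ->
    (#|[set t | s_crashed (srv g t)]| < f)%N ->
    step g (LCrash s)
      (set_srv g s (SState (s_view x) (s_enabled x) (s_reg x) (s_cv x) (s_su x) true))
| st_invoke g c y o :
    y = cli g c -> c_status y = Idle ->
    step g (LInvoke c)
      (set_net (set_cli g c (CState (c_view y) (c_rid y).+1 (Busy o Ph1 None [::])))
               (net g ++ bcast (fun t => MReq t c (c_rid y).+1 Ph1 (c_view y) None)))
| st_drop g c y l1 l2 t rid sv wt r :
    y = cli g c -> net g = l1 ++ MRep c t rid sv wt r :: l2 ->
    (c_status y = Idle \/ rid <> c_rid y) ->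
    step g (LDrop c) (set_net g (l1 ++ l2))
| st_restart g c y l1 l2 t sv wt r o ph wr coll :
    y = cli g c -> net g = l1 ++ MRep c t (c_rid y) sv wt r :: l2 ->
    c_status y = Busy o ph wr coll -> sv <> c_view y ->
    step g (LRestart c)
      (set_net (set_cli g c (CState (maxn (c_view y) sv) (c_rid y).+1
                                    (Busy o Ph1 None [::])))
               (l1 ++ l2 ++ bcast (fun u => MReq u c (c_rid y).+1 Ph1
                                                (maxn (c_view y) sv) None)))
| st_collect g c y l1 l2 t wt r o ph wr coll coll' :
    y = cli g c -> net g = l1 ++ MRep c t (c_rid y) (c_view y) wt r :: l2 ->
    c_status y = Busy o ph wr coll ->
    coll' = (if t \in [seq e.1.1 | e <- coll] then coll
             else (t, odflt 0 wt, r) :: coll) ->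
    coll_weight coll' <= half_n ->
    step g (LCollect c)
      (set_net (set_cli g c (CState (c_view y) (c_rid y) (Busy o ph wr coll')))
               (l1 ++ l2))
| st_done1 g c y l1 l2 t wt r o wr coll coll' :
    y = cli g c -> net g = l1 ++ MRep c t (c_rid y) (c_view y) wt r :: l2 ->
    c_status y = Busy o Ph1 wr coll ->
    coll' = (if t \in [seq e.1.1 | e <- coll] then coll
             else (t, odflt 0 wt, r) :: coll) ->
    half_n < coll_weight coll' ->
    let mx := foldr reg_max reg_init [seq e.2 | e <- coll'] in
    let wr' := match o with
               | OpRead => mx
               | OpWrite x => (x, (rts mx).+1, c.+1)
               end in
    step g (LPhaseDone c Ph1 (c_rid y) (c_view y))
      (set_net (set_cli g c (CState (c_view y) (c_rid y).+1 (Busy o Ph2 (Some wr') [::])))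
               (l1 ++ l2 ++ bcast (fun u => MReq u c (c_rid y).+1 Ph2 (c_view y)
                                                (Some wr'))))
| st_done2 g c y l1 l2 t wt r o wr coll coll' :
    y = cli g c -> net g = l1 ++ MRep c t (c_rid y) (c_view y) wt r :: l2 ->
    c_status y = Busy o Ph2 wr coll ->
    coll' = (if t \in [seq e.1.1 | e <- coll] then coll
             else (t, odflt 0 wt, r) :: coll) ->
    half_n < coll_weight coll' ->
    step g (LPhaseDone c Ph2 (c_rid y) (c_view y))
      (set_net (set_cli g c (CState (c_view y) (c_rid y) Idle)) (l1 ++ l2)).

Definition execution (ex : nat -> gstate) (lab : nat -> label) (k : nat) : Prop :=
  ex 0%N = init_state /\ forall i, (i < k)%N -> step (ex i) (lab i) (ex i.+1).

End Model.

(* Main.v *)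
Require Import Defs.
From Stdlib Require Import Setoid.
From HB Require Import structures.
From mathcomp Require Import all_boot all_order all_algebra.
From mathcomp Require Import lra.
Import Order.TTheory GRing.Theory Num.Theory.
Local Open Scope ring_scope.

Section P.
Variables (R : realFieldType) (n f : nat) (W : view -> 'I_n -> R).
Local Notation G := (gstate R n).
Local Notation stp := (@step R n f W).

Definition Sev (a b : sstate n) : Prop :=
  (s_view b = s_view a /\ (s_enabled b -> s_enabled a)) \/ s_view b = (s_view a).+1.

Lemma srv_evol g l g' : stp g l g' -> forall t, Sev (srv g t) (srv g' t).
Proof.
move=> h t; case: h => *; rewrite /Sev /set_net /set_srv /set_cli /=;
  try (case: ifP => [/eqP->|_]); subst => /=;
  first [left; split; [done| move=> *; done] | right; done].
Qed.

Definition D (g : G) (v : view) : {set 'I_n} :=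
  [set t | (v < s_view (srv g t))%N || ((s_view (srv g t) == v) && ~~ s_enabled (srv g t))].

Lemma view_mono g l g' t : stp g l g' -> (s_view (srv g t) <= s_view (srv g' t))%N.
Proof. by move/srv_evol/(_ t) => [[-> _]|->]. Qed.

Lemma D_mono g l g' v : stp g l g' -> D g v \subset D g' v.
Proof.
move=> /srv_evol h; apply/subsetP => t; rewrite !inE.
case: (h t) => [[-> he]|->].
  case/orP=> [->//|/andP[e1 e2]]; rewrite e1 /=; apply/orP; right.
  by apply: contra e2 => /he.
case/orP=> [h1|/andP[/eqP-> _]]; by rewrite ltnS ?leqnn ?(ltnW h1).
Qed.

Lemma view_le_lv (g : G) t : (s_view (srv g t) <= lastview g)%N.
Proof. rewrite /lastview; exact: (@leq_bigmax _ (fun s => s_view (srv g s))). Qed.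

Lemma lv_mono g l g' : stp g l g' -> (lastview g <= lastview g')%N.
Proof.
move=> h; apply/bigmax_leqP => t _.
exact: (leq_trans (view_mono _ _ _ t h) (view_le_lv g' t)).
Qed.

Lemma lv_le g l g' : stp g l g' -> (lastview g' <= (lastview g).+1)%N.
Proof.
move=> /srv_evol h; apply/bigmax_leqP => t _.
case: (h t) => [[-> _]|->]; last by rewrite ltnS view_le_lv.
exact: leq_trans (view_le_lv g t) (leqnSn _).
Qed.


Fixpoint In {T : Type} (x : T) (s : seq T) : Prop :=
  match s with [::] => False | a :: s' => a = x \/ In x s' end.

Lemma In_cat (T : Type) (x : T) (s1 s2 : seq T) : In x (s1 ++ s2) <-> In x s1 \/ In x s2.
Proof.
elim: s1 => [|a s IH] /=; first by split; [right|case].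
rewrite IH; tauto.
Qed.

Lemma In_bcast (m : msg R n) F : In m (bcast F) -> exists t, m = F t.
Proof.
rewrite /bcast; elim: (enum 'I_n) => [|a s IH] //= [<-|/IH//]; by exists a.
Qed.

Lemma In_rm (m x : msg R n) l1 l2 : In m (l1 ++ l2) -> In m (l1 ++ x :: l2).
Proof. rewrite !In_cat /=; tauto. Qed.

Definition new_msg (g g' : G) (m : msg R n) : Prop :=
  (exists t w, m = MChangeView R t w) \/
  (exists dst src r v w, m = MStateUpdate R dst src r v w /\ v = s_view (srv g' src) /\ ~~ s_enabled (srv g' src)) \/
  (exists c t rid sv wt r, m = MRep c t rid sv wt r /\ sv = s_view (srv g t) /\ s_enabled (srv g t) /\
      (wt = None \/ wt = Some (W sv t)) /\ exists ph v' wr, In (MReq R t c rid ph v' wr) (net g)) \/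
  (exists dst c rid ph v wr, m = MReq R dst c rid ph v wr /\ rid = c_rid (cli g' c)).

Lemma net_origin g l g' m : stp g l g' -> In m (net g') -> In m (net g) \/ new_msg g g' m.
Proof.
case=> /=.
- move=> g0 s x -> _; rewrite In_cat => -[|/In_bcast [t ->]]; [by left|right].
  by left; do 2 eexists.
- move=> g0 s x l1 l2 w -> _ -> /In_rm; by left.
- move=> g0 s x -> _ _ _; rewrite !In_cat => -[|[/In_bcast [t ->]|/In_bcast [t ->]]]; [by left| | ].
  + by right; left; do 2 eexists.
  + right; right; left; do 5 eexists; split; first reflexivity.
    by rewrite /set_srv /= eqxx.
- move=> g0 s x l1 l2 src r v w -> _ -> /In_rm; by left.
- by move=> *; left.
- move=> g0 s x l1 l2 c rid ph v wr -> _ en hn; rewrite !In_cat /= => -[|[|[<-|//]]].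
  + by move=> h; left; rewrite hn; apply: In_rm; rewrite In_cat; left.
  + by move=> h; left; rewrite hn; apply: In_rm; rewrite In_cat; right.
  + right; right; right; left; do 6 eexists; split; first reflexivity.
    split; first by [].  split; first by [].
    split; first by case: (_ == _); [right|left].
    by do 3 eexists; rewrite hn In_cat; right; left.
- by move=> *; left.
- move=> g0 c y o -> _; rewrite In_cat => -[|/In_bcast [t ->]]; [by left|right].
  right; right; right; do 6 eexists; split; first reflexivity.
  by rewrite /set_cli /= eqxx.
- move=> g0 c y l1 l2 t rid sv wt r _ -> _ /In_rm; by left.
- move=> g0 c y l1 l2 t sv wt r o ph wr coll -> hn _ _; rewrite !In_cat => -[|[|/In_bcast [u ->]]].
  + by move=> h; left; rewrite hn; apply: In_rm; rewrite In_cat; left.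
  + by move=> h; left; rewrite hn; apply: In_rm; rewrite In_cat; right.
  + right; right; right; right; do 6 eexists; split; first reflexivity.
    by rewrite /set_cli /= eqxx.
- move=> g0 c y l1 l2 t wt r o ph wr coll coll' _ -> *; left; exact: In_rm.
- move=> g0 c y l1 l2 t wt r o wr coll coll' -> hn _ _ _; rewrite !In_cat => -[|[|/In_bcast [u ->]]].
  + by move=> h; left; rewrite hn; apply: In_rm; rewrite In_cat; left.
  + by move=> h; left; rewrite hn; apply: In_rm; rewrite In_cat; right.
  + right; right; right; right; do 6 eexists; split; first reflexivity.
    by rewrite /set_cli /= eqxx.
- move=> g0 c y l1 l2 t wt r o wr coll coll' _ -> *; left; exact: In_rm.
Qed.

Lemma su_origin g l g' s e : stp g l g' -> e \in s_su (srv g' s) ->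
  e \in s_su (srv g s) \/ exists dst w, In (MStateUpdate R dst e.1.2 e.2 e.1.1 w) (net g).
Proof.
move=> h; case: h => *; match goal with H : is_true (e \in _) |- _ => move: H end;
  rewrite /set_net /set_srv /set_cli /=;
  try (case: ifP => [/eqP ?|_]); subst => /=; try by left.
rewrite in_cons => /orP[/eqP ->|]; last by left.
right; do 2 eexists; match goal with H : net _ = _ |- _ => rewrite H end.
by rewrite In_cat; right; left.
Qed.

Definition lab_cl (l : label n) : option client :=
  match l with
  | LInvoke c | LRestart c | LCollect c | LPhaseDone c _ _ _ => Some c
  | _ => None end.

Lemma cli_frame g l g' d : stp g l g' -> lab_cl l <> Some d -> cli g' d = cli g d.
Proof.
case=> * //=; rewrite /set_cli /=; case: ifP => // /eqP ?; subst;
  exfalso; match goal with H: _ <> Some _ |- _ => by apply: H end.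
Qed.

Lemma crid_mono g l g' d : stp g l g' -> (c_rid (cli g d) <= c_rid (cli g' d))%N.
Proof.
case=> * //=; rewrite /set_cli /=; try (case: ifP => // /eqP ?); subst => //=.
Qed.

Lemma new_rep g g' c t rid sv wt r : new_msg g g' (MRep c t rid sv wt r) ->
  sv = s_view (srv g t) /\ s_enabled (srv g t) /\
      (wt = None \/ wt = Some (W sv t)) /\ exists ph v' wr, In (MReq R t c rid ph v' wr) (net g).
Proof.
case=> [[? [? //]]|[[? [? [? [? [? [//]]]]]]|[|[? [? [? [? [? [? [//]]]]]]]]]].
move=> [c0 [t0 [rid0 [sv0 [wt0 [r0 [E H]]]]]]]; case: E => *; subst; exact: H.
Qed.

Lemma new_su g g' dst src r v w : new_msg g g' (MStateUpdate R dst src r v w) ->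
  v = s_view (srv g' src) /\ ~~ s_enabled (srv g' src).
Proof.
case=> [[? [? //]]|[|[[? [? [? [? [? [? [//]]]]]]]|[? [? [? [? [? [? [//]]]]]]]]]].
move=> [c0 [t0 [rid0 [sv0 [wt0 [E H]]]]]]; case: E => *; subst; exact: H.
Qed.

Lemma new_req g g' dst c rid ph v wr : new_msg g g' (MReq R dst c rid ph v wr) ->
  rid = c_rid (cli g' c).
Proof.
case=> [[? [? //]]|[[? [? [? [? [? [//]]]]]]|[[? [? [? [? [? [? [//]]]]]]]|]]].
move=> [c0 [t0 [rid0 [sv0 [wt0 [r0 [E H]]]]]]]; case: E => *; subst; done.
Qed.


Hypothesis Wpos : forall v s, 0 < W v s.
Hypothesis Wsum : forall v, \sum_(s < n) W v s <= n%:R.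

Lemma sum_sub (A B : {set 'I_n}) v : A \subset B -> \sum_(t in A) W v t <= \sum_(t in B) W v t.
Proof.
move=> /subsetP sAB; rewrite [X in X <= _]big_mkcond [X in _ <= X]big_mkcond /=.
apply: ler_sum => t _; case: ifP => hA; first by rewrite (sAB _ hA).
by case: ifP => // _; exact: ltW.
Qed.

Lemma install_char g l g' t : stp g l g' -> s_view (srv g' t) = (s_view (srv g t)).+1 ->
  half_n R n < \sum_(u in su_senders (s_su (srv g t)) (s_view (srv g t))) W (s_view (srv g t)) u.
Proof.
move=> h; case: h => *; match goal with H : s_view (srv _ t) = _ |- _ => move: H end;
  rewrite /set_net /set_srv /set_cli /=;
  try (case: ifP => [/eqP ?|_]); subst => /=; try by move=> /n_Sn.
by move=> _.
Qed.

Definition GI (g : G) : Prop :=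
 (forall v, (v < lastview g)%N -> half_n R n < \sum_(t in D g v) W v t) /\
 (forall s e, e \in s_su (srv g s) -> e.1.2 \in D g e.1.1) /\
 (forall dst src r v w, In (MStateUpdate R dst src r v w) (net g) -> src \in D g v) /\
 (forall c t rid sv wt r, In (MRep c t rid sv wt r) (net g) ->
     (sv <= s_view (srv g t))%N /\ (wt = None \/ wt = Some (W sv t)) /\ (rid <= c_rid (cli g c))%N) /\
 (forall dst c rid ph v wr, In (MReq R dst c rid ph v wr) (net g) -> (rid <= c_rid (cli g c))%N).

Lemma GI_init : GI (init_state R n).
Proof.
split; last by [].
move=> v; rewrite /lastview /= big_const_ord.
suff -> : iter n (maxn v0) 0%N = 0%N by [].
by elim: n => //= k ->.
Qed.

Lemma GI_pres g l g' : GI g -> stp g l g' -> GI g'.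
Proof.
move=> [G1 [G2 [G3 [G4 G5]]]] h; split; [|split; [|split; [|split]]].
- move=> v hv; case: (ltnP v (lastview g)) => hv0.
    exact: lt_le_trans (G1 _ hv0) (sum_sub _ _ _ (D_mono _ _ _ v h)).
  have [t ht] : exists t, (v < s_view (srv g' t))%N.
    apply/existsP; apply: contraLR hv; rewrite negb_exists -leqNgt => /forallP H.
    by apply/bigmax_leqP => t _; rewrite leqNgt H.
  have hvt := leq_trans (view_le_lv g t) hv0.
  have E : s_view (srv g' t) = (s_view (srv g t)).+1.
    case: (srv_evol _ _ _ h t) => [[E _]|//]; move: ht; rewrite E => ht.
    by move: (leq_ltn_trans hvt ht); rewrite ltnn.
  have Ev : v = s_view (srv g t).
    by apply/eqP; rewrite eqn_leq hvt andbT -ltnS -E.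
  subst v; apply: lt_le_trans (install_char _ _ _ _ h E) _.
  apply: sum_sub; apply/subsetP => u; rewrite inE => /hasP [e he /andP[/eqP e1 /eqP e2]].
  move: (G2 _ _ he); rewrite e1 e2 => hu.
  exact: (subsetP (D_mono _ _ _ _ h)).
- move=> s e he; case: (su_origin _ _ _ _ _ h he) => [he0|[dst [w hin]]].
    exact: (subsetP (D_mono _ _ _ _ h) _ (G2 _ _ he0)).
  exact: (subsetP (D_mono _ _ _ _ h) _ (G3 _ _ _ _ _ hin)).
- move=> dst src r v w hin; case: (net_origin _ _ _ _ h hin) => [hin0|hn].
    exact: (subsetP (D_mono _ _ _ _ h) _ (G3 _ _ _ _ _ hin0)).
  case: (new_su _ _ _ _ _ _ _ hn) => -> hen; by rewrite inE eqxx hen orbT.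
- move=> c t rid sv wt r hin; case: (net_origin _ _ _ _ h hin) => [hin0|hn].
    case: (G4 _ _ _ _ _ _ hin0) => [h1 [h2 h3]]; split; last split => //.
      exact: leq_trans h1 (view_mono _ _ _ _ h).
    exact: leq_trans h3 (crid_mono _ _ _ _ h).
  case: (new_rep _ _ _ _ _ _ _ _ hn) => [-> [_ [hw [ph [v' [wr hq]]]]]]; split; last split => //.
    exact: view_mono h.
  exact: leq_trans (G5 _ _ _ _ _ _ hq) (crid_mono _ _ _ _ h).
- move=> dst c rid ph v wr hin; case: (net_origin _ _ _ _ h hin) => [hin0|hn].
    exact: leq_trans (G5 _ _ _ _ _ _ hin0) (crid_mono _ _ _ _ h).
  by rewrite (new_req _ _ _ _ _ _ _ _ hn).
Qed.


Definition CIs (Wt : nat -> view -> Prop) (g : G) (d : client) : Prop :=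
 let y := cli g d in
 match c_status y with
 | Idle => True
 | Busy o ph wr coll =>
   uniq [seq e.1.1 | e <- coll] /\
   (forall e, e \in coll -> e.1.2 = 0 \/ e.1.2 = W (c_view y) e.1.1) /\
   (Wt (c_rid y) (c_view y) \/ ((lastview g < c_view y)%N /\ coll = [::]) \/
    exists X : {set 'I_n}, half_n R n < \sum_(t in X) W (c_view y) t /\ X \subset D g (c_view y) /\
      (forall e, e \in coll -> e.1.1 \notin X) /\
      (forall t wt r, In (MRep d t (c_rid y) (c_view y) wt r) (net g) -> t \notin X))
 end.

Lemma notD g t : s_enabled (srv g t) -> t \notin D g (s_view (srv g t)).
Proof. by move=> he; rewrite inE ltnn eqxx he. Qed.

Lemma CI_frame g l g' d (Wt Wt' : nat -> view -> Prop) :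
  GI g -> stp g l g' -> cli g' d = cli g d ->
  (forall rid v, Wt rid v -> Wt' rid v) ->
  (forall rid v, lastview g' = v -> c_rid (cli g' d) = rid -> Wt' rid v) ->
  CIs Wt g d -> CIs Wt' g' d.
Proof.
move=> gi h hc hW hW'; rewrite /CIs hc.
case: (c_status (cli g d)) => // o ph wr coll [u [w abc]]; split => //; split => //.
case: abc => [A|[[B1 B2]|[X [X1 [X2 [X3 X4]]]]]].
- by left; apply: hW.
- case: (ltnP (lastview g') (c_view (cli g d))) => hlt.
    by right; left; split.
  left; apply: hW'; last by rewrite hc.
  by apply/eqP; rewrite eqn_leq hlt andbT; exact: leq_trans (lv_le _ _ _ h) B1.
- right; right; exists X; split => //; split.
    exact: subset_trans X2 (D_mono _ _ _ _ h).
  split => // t wt r hin; case: (net_origin _ _ _ _ h hin) => [hin0|hn]; first exact: X4 _ _ _ hin0.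
  case: (new_rep _ _ _ _ _ _ _ _ hn) => [E [he _]].
  apply: contra (notD _ _ he) => /(subsetP X2); by rewrite -E.
Qed.

Lemma In_mid (x : msg R n) l1 l2 : In x (l1 ++ x :: l2).
Proof. by rewrite In_cat; right; left. Qed.

Lemma CI_start g' d (Wt' : nat -> view -> Prop) o ph wr :
  GI g' -> c_status (cli g' d) = Busy o ph wr [::] ->
  (forall t sv wt r, ~ In (MRep d t (c_rid (cli g' d)) sv wt r) (net g')) ->
  (forall rid v, lastview g' = v -> c_rid (cli g' d) = rid -> Wt' rid v) ->
  CIs Wt' g' d.
Proof.
move=> [G1 _] hs hn hW'; rewrite /CIs hs; split => //; split => //.
case: (ltngtP (lastview g') (c_view (cli g' d))) => hv.
- by right; left.
- right; right; exists (D g' (c_view (cli g' d))); split; first exact: G1.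
  split => //; split => // t wt r hin; by case: (hn _ _ _ _ hin).
- by left; apply: hW'.
Qed.

Lemma no_rep g l g' d : GI g -> stp g l g' -> c_rid (cli g' d) = (c_rid (cli g d)).+1 ->
  forall t sv wt r, ~ In (MRep d t (c_rid (cli g' d)) sv wt r) (net g').
Proof.
move=> [_ [_ [_ [G4 G5]]]] h E t sv wt r hin; rewrite E in hin.
case: (net_origin _ _ _ _ h hin) => [hin0|hn].
  by case: (G4 _ _ _ _ _ _ hin0) => _ [_]; rewrite ltnn.
case: (new_rep _ _ _ _ _ _ _ _ hn) => _ [_ [_ [ph [v' [wr hq]]]]].
by move: (G5 _ _ _ _ _ _ hq); rewrite ltnn.
Qed.

Lemma CI_step g l g' d (Wt Wt' : nat -> view -> Prop) :
  GI g -> GI g' -> stp g l g' ->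
  (forall rid v, Wt rid v -> Wt' rid v) ->
  (forall rid v, lastview g' = v -> c_rid (cli g' d) = rid -> Wt' rid v) ->
  CIs Wt g d -> CIs Wt' g' d.
Proof.
move=> gi gi' h hW hW'.
case: (eqVneq (lab_cl l) (Some d)) => hl; last first.
  apply: (CI_frame _ _ _ _ _ _ gi h _ hW hW'); apply: (cli_frame _ _ _ _ h) => E; by rewrite E eqxx in hl.
have h0 := h.
move: h0 gi gi' hW hW' hl; case: h => //=.
- move=> g0 c y o Ey Hs h0 gi gi' hW hW' [?] _; subst d.
  apply: (CI_start _ _ _ o Ph1 None gi'); first by rewrite /set_cli /= eqxx.
    by apply: (no_rep _ _ _ _ gi h0); rewrite /set_cli /= eqxx Ey.
  exact: hW'.
- move=> g0 c y l1 l2 t sv wt r o ph wr coll Ey Hn Hs Hsv h0 gi gi' hW hW' [?] _; subst d.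
  apply: (CI_start _ _ _ o Ph1 None gi'); first by rewrite /set_cli /= eqxx.
    by apply: (no_rep _ _ _ _ gi h0); rewrite /set_cli /= eqxx Ey.
  exact: hW'.
- move=> g0 c y l1 l2 t wt r o ph wr coll coll' Ey Hn Hs Hc Hw h0 gi gi' hW hW' [?]; subst d.
  rewrite /CIs /set_cli /= eqxx -Ey Hs /= => -[u [w abc]].
  have [G1 [G2 [G3 [G4 G5]]]] := gi.
  have hin : In (MRep c t (c_rid y) (c_view y) wt r) (net g0) by rewrite Hn; exact: In_mid.
  have [hsv [hwt _]] := G4 _ _ _ _ _ _ hin.
  split; [|split].
  + rewrite Hc; case: ifP => //= ->; by rewrite u.
  + move=> e; rewrite Hc; case: ifP => _; first exact: w.
    rewrite in_cons => /orP[/eqP -> /=|]; last exact: w.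
    by case: hwt => ->; [left|right].
  + case: abc => [A|[[B1 B2]|[X [X1 [X2 [X3 X4]]]]]].
    * by left; apply: hW.
    * exfalso; move: (leq_trans hsv (view_le_lv g0 t)) => hh.
      by move: (leq_ltn_trans hh B1); rewrite ltnn.
    * right; right; exists X; split => //; split.
        exact: subset_trans X2 (D_mono _ _ _ _ h0).
      split.
        move=> e; rewrite Hc; case: ifP => _; first exact: X3.
        rewrite in_cons => /orP[/eqP -> /=|]; last exact: X3.
        by apply: X4 _ _ hin.
      move=> t' wt' r' hin'; apply: (X4 _ wt' r').
      rewrite Hn; exact: In_rm.
- move=> g0 c y l1 l2 t wt r o wr coll coll' Ey Hn Hs Hc Hw h0 gi gi' hW hW' [?] _; subst d.
  apply: (CI_start _ _ _ o Ph2 _ gi'); first by rewrite /set_cli /= eqxx.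
    by apply: (no_rep _ _ _ _ gi h0); rewrite /set_cli /= eqxx Ey.
  exact: hW'.
- move=> g0 c y l1 l2 t wt r o wr coll coll' Ey Hn Hs Hc Hw h0 gi gi' hW hW' [?] _; subst d.
  by rewrite /CIs /set_cli /= eqxx.
Qed.

Lemma done_inv g c ph rid v g' : stp g (LPhaseDone n c ph rid v) g' ->
  exists y l1 l2 t wt r o ph' wr coll (coll' : seq ('I_n * R * reg)),
   y = cli g c /\ net g = l1 ++ MRep c t rid v wt r :: l2 /\ c_status y = Busy o ph' wr coll /\
   coll' = (if t \in [seq e.1.1 | e <- coll] then coll else (t, odflt 0 wt, r) :: coll) /\
   half_n R n < coll_weight coll' /\ rid = c_rid y /\ v = c_view y.
Proof.
move=> h; inversion h; subst; do 11 eexists;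
  (split; [reflexivity|]); (split; [eassumption|]); (split; [eassumption|]);
  (split; [reflexivity|]); (split; [eassumption|]); split; reflexivity.
Qed.

Lemma weight_contra v (X : {set 'I_n}) (coll : seq ('I_n * R * reg)) :
  half_n R n < \sum_(t in X) W v t -> half_n R n < coll_weight coll ->
  uniq [seq e.1.1 | e <- coll] -> (forall e, e \in coll -> e.1.2 = 0 \/ e.1.2 = W v e.1.1) ->
  (forall e, e \in coll -> e.1.1 \notin X) -> False.
Proof.
move=> hX hC u w dj.
have h1 : coll_weight coll <= \sum_(t in [seq e.1.1 | e <- coll]) W v t.
  rewrite -big_uniq // big_map /coll_weight [X in X <= _]big_seq [X in _ <= X]big_seq.
  by apply: ler_sum => e he; case: (w e he) => ->; [exact: ltW|].
have h2 : \sum_(t in X) W v t + \sum_(t in [seq e.1.1 | e <- coll]) W v t <= n%:R.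
  apply: le_trans (Wsum v); rewrite [X in X + _]big_mkcond [X in _ + X]big_mkcond -big_split /=.
  apply: ler_sum => t _; case: ifP => hx; case: ifP => hs.
  - exfalso; case/mapP: hs => e he Et; by move: (dj e he); rewrite -Et hx.
  - by rewrite addr0.
  - by rewrite add0r.
  - by rewrite addr0; exact: ltW.
have := lt_le_trans hC h1; move: hX h2; rewrite /half_n.
set a := \sum_(t in X) W v t; set b := \sum_(t in _) W v t => ha hab hb.
set N := (n%:R : R); move: ha hab hb; clear; move=> ha hab hb; lra.
Qed.

Lemma final g c ph rid v g' (Wt : nat -> view -> Prop) :
  GI g -> CIs Wt g c -> stp g (LPhaseDone n c ph rid v) g' -> Wt rid v.
Proof.
move=> gi ci h.
have [y [l1 [l2 [t [wt [r [o [ph' [wr [coll [coll' [Ey [Hn [Hs [Hc [Hw [Er Ev]]]]]]]]]]]]]]]]] :=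
  done_inv _ _ _ _ _ _ h.
move: ci; rewrite /CIs -Ey Hs -Er -Ev => -[u [w abc]].
have [G1 [G2 [G3 [G4 G5]]]] := gi.
have hin : In (MRep c t rid v wt r) (net g) by rewrite Hn; exact: In_mid.
have [hsv [hwt _]] := G4 _ _ _ _ _ _ hin.
case: abc => [//|[[B1 B2]|[X [X1 [X2 [X3 X4]]]]]].
  exfalso; move: (leq_trans hsv (view_le_lv g t)) => hh.
  by move: (leq_ltn_trans hh B1); rewrite ltnn.
exfalso; apply: (weight_contra v X coll' X1 Hw).
- rewrite Hc; case: ifP => //= ->; by rewrite u.
- move=> e; rewrite Hc; case: ifP => _; first exact: w.
  rewrite in_cons => /orP[/eqP -> /=|]; last exact: w.
  by case: hwt => ->; [left|right].
- move=> e; rewrite Hc; case: ifP => _; first exact: X3.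
  rewrite in_cons => /orP[/eqP -> /=|]; last exact: X3.
  exact: (X4 _ _ _ hin).
Qed.
End P.

Theorem lemma8 (R : realFieldType) (n f : nat) (W : view -> 'I_n -> R)
  (hfn : (2 * f + 1 <= n)%N)
  (hWlo : forall v s, n%:R < W v s * (2 * (n - f))%:R)
  (hWhi : forall v s, W v s * (2 * f)%:R < n%:R)
  (hWsum : forall v, \sum_(s < n) W v s <= n%:R)
  (ex : nat -> gstate R n) (lab : nat -> label n) (k : nat) :
  execution f W ex lab k ->
  forall (j : nat) (c : client) (ph : phase) (rid : nat) (v : view),
    (j < k)%N -> lab j = LPhaseDone n c ph rid v ->
    exists m : nat, (m <= j)%N /\ c_rid (cli (ex m) c) = rid /\ lastview (ex m) = v.
Proof.
move=> [E0 Hst] j c ph rid v hj hl.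
have Wpos : forall v s, 0 < W v s.
  move=> v' s; rewrite ltNge; apply/negP => hle.
  have := hWlo v' s; rewrite ltNge => /negP; apply.
  apply: le_trans (ler0n _ _); apply: mulr_le0_ge0 => //; exact: ler0n.
pose wit i d rid v := exists m, (m <= i)%N /\ c_rid (cli (ex m) d) = rid /\ lastview (ex m) = v.
have inv : forall i, (i <= k)%N -> GI R n W (ex i) /\ forall d, CIs R n W (wit i d) (ex i) d.
  elim=> [_|i IH hi].
    rewrite E0; split; first exact: GI_init.
    by move=> d; rewrite /CIs /=.
  have [gi ci] := IH (ltnW hi).
  have h := Hst i hi.
  have gi' := GI_pres _ _ _ _ Wpos _ _ _ gi h.
  split => // d.
  apply: (CI_step _ _ _ _ _ _ _ _ _ _ gi gi' h _ _ (ci d)).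
    by move=> r0 v0' [m [hm H]]; exists m; split => //; exact: leqW.
  by move=> r0 v0' H1 H2; exists i.+1.
have [gi ci] := inv j (ltnW hj).
have h := Hst j hj; rewrite hl in h.
exact: (final _ _ _ _ Wpos hWsum _ _ _ _ _ _ _ gi (ci c) h).
Qed.
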